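(* Let $D\ge3$ and let $\mathcal G$ be a connected closed $(D+1)$-colored graph with colors $0,1,\dots,D$ and $2p$ vertices. Let $\mathcal B_{(1)},\dots,\mathcal B_{(|\rho|)}$ be the connected components of the subgraph of $\mathcal G$ formed by all vertices and all lines of colors $1,\dots,D$ (each is a connected closed $D$-colored graph), and for $i=1,\dots,D$ let $|\mathcal F_{0i}|$ be the number of faces of $\mathcal G$ of colors $\{0,i\}$. Then $$(D-1)|\rho| - \frac{2}{(D-2)!}\sum_{\rho}\omega(\mathcal B_{(\rho)}) - (D-1)p + \sum_{i=1}^D|\mathcal F_{0i}| \;=\; D - \frac{2}{(D-1)!}\,\omega(\mathcal G).$$ Consequently, in the tensor model with action $S(T,\bar T)=t_1\mathrm{Tr}_{\mathcal B_1}(T,\bar T)+\sum_{\mathcal B}t_{\mathcal B}N^{-\frac{2}{(D-2)!}\omega(\mathcal B)}\mathrm{Tr}_{\mathcal B}(T,\bar T)$ and weight $e^{-N^{D-1}S}$, the Feynman amplitude of $\mathcal G$ equals $\frac{\prod_\rho t_{\mathcal B_{(\rho)}}}{t_1^{p}}\,N^{D-\frac{2}{(D-1)!}\omega(\mathcal G)}$.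
   Context: A closed $n$-colored graph is a finite graph (multiple lines allowed) whose vertex set is partitioned into white and black vertices of equal number, every line joining a white to a black vertex, whose lines are each assigned one of $n$ colors, and such that every vertex has degree $n$ with the $n$ lines incident to it having pairwise distinct colors. A face of colors $\{i,j\}$ is a connected component of the subgraph formed by all vertices and all lines of colors $i,j$. For a cyclic permutation $\tau$ of the color set, the jacket $\mathcal J_\tau$ is the ribbon graph with all vertices and lines of the graph whose faces are the faces of colors $\{\tau^q(c),\tau^{q+1}(c)\}$ for all $q$; $\tau$ and $\tau^{-1}$ give the same jacket; its genus $g$ is defined by $V-E+F=2-2g$. The degree $\omega$ of a graph is the sum of genera of all its distinct jackets. For a $D$-colored graph $\mathcal B$, $\mathrm{Tr}_{\mathcal B}(T,\bar T)=\sum\prod_{i=1}^D\prod_{\text{lines } (v,\bar v)\text{ of color } i}\delta_{n^v_i\bar n^{\bar v}_i}\prod_{v}T_{\vec n^v}\prod_{\bar v}\bar T_{\bar{\vec n}^{\bar v}}$, with one complex rank-$D$ tensor $T$ (indices in $\{1,\dots,N\}$) per white vertex and one $\bar T$ per black vertex; $\mathcal B_1$ is the unique $D$-colored graph with two vertices. In the Feynman expansion each Wick contraction (a color-$0$ line) contributes $\frac{1}{t_1N^{D-1}}\prod_i\delta_{n_i\bar n_i}$ and each bubble $\mathcal B_{(\rho)}$ contributes $t_{\mathcal B_{(\rho)}}N^{D-1-\frac{2}{(D-2)!}\omega(\mathcal B_{(\rho)})}$ times its index contractions; each face of colors $\{0,i\}$ gives a free index sum, i.e. a factor $N$. *)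

(* Defs.v *)
From HB Require Import structures.
From mathcomp Require Import all_boot all_order all_algebra all_fingroup.
Set Implicit Arguments. Unset Strict Implicit. Unset Printing Implicit Defensive.
Import Order.TTheory GRing.Theory Num.Theory.

(* A closed colored graph with 2p vertices and colors in a finite type Col:
   white vertices are inl w, black vertices are inr b (w, b : 'I_p);
   sg c w = b  iff the line of color c at the white vertex w ends at the
   black vertex b.  This encodes exactly: bipartite, every vertex of degree
   #|Col| with pairwise distinct colors on its lines, multiple lines allowed. *)
Definition vtx (p : nat) := ('I_p + 'I_p)%type.

Section ColoredGraph.
Variables (Col : finType) (p : nat) (sg : Col -> {perm 'I_p}).

Definition edge (S : {set Col}) : rel (vtx p) := fun x y =>
  match x, y with
  | inl w, inr b => [exists c in S, sg c w == b]
  | inr b, inl w => [exists c in S, sg c w == b]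
  | _, _ => false
  end.

(* number of connected components, inside the (S-closed) vertex set C,
   of the subgraph with line colors in S; for S = {i,j} these are the
   faces of colors {i,j} *)
Definition nfaces (S : {set Col}) (C : {set vtx p}) : nat :=
  n_comp (edge S) (mem C).

Definition nvert (C : {set vtx p}) : nat := #|C|.
Definition nlines (C : {set vtx p}) : nat :=
  #|[set wc : 'I_p * Col | inl wc.1 \in C]|.

Definition cyclic_perm (tau : {perm Col}) : bool :=
  [forall c, porbit tau c == [set: Col]].

(* the jacket J_tau, identified with the set of color pairs of its faces
   {tau^q(c), tau^(q+1)(c)}; J_tau = J_(tau^-1) automatically *)
Definition jacket_of (tau : {perm Col}) : {set {set Col}} :=
  [set [set c; tau c] | c : Col].

Definition jackets : {set {set {set Col}}} :=
  [set jacket_of tau | tau in [set tau : {perm Col} | cyclic_perm tau]].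

(* genus of a jacket J of the graph with vertex set C: V - E + F = 2 - 2g *)
Definition jacket_genus (J : {set {set Col}}) (C : {set vtx p}) : rat :=
  (2 - (nvert C)%:R + (nlines C)%:R - (\sum_(P in J) nfaces P C)%:R) / 2.

Definition degree (C : {set vtx p}) : rat :=
  \sum_(J in jackets) jacket_genus J C.

Definition connected_graph : Prop :=
  forall x y : vtx p, connect (edge [set: Col]) x y.

End ColoredGraph.

Definition colors1D (D : nat) : {set 'I_D.+1} := [set c | c != ord0].

Definition bubbles (D p : nat) (sg : 'I_D.+1 -> {perm 'I_p}) : {set {set vtx p}} :=
  [set [set y | connect (edge sg (colors1D D)) x y] | x : vtx p].

(* the D-colored graph of a bubble: colors 1..D, i.e. lift ord0 i for i : 'I_D *)
Definition bubble_colors (D p : nat) (sg : 'I_D.+1 -> {perm 'I_p}) : 'I_D -> {perm 'I_p} :=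
  fun i => sg (lift ord0 i).

(* Main.v *)
Require Import Defs.
From mathcomp Require Import all_boot all_order all_algebra all_fingroup.
From mathcomp Require Import ring lra.
Import GRing.Theory Num.Theory.
Set Implicit Arguments. Unset Strict Implicit. Unset Printing Implicit Defensive.

Lemma cycP (T : finType) (t : {perm T}) : cyclic_perm t -> forall x y, y \in porbit t x.
Proof. by move=> /forallP H x y; rewrite (eqP (H x)) inE. Qed.

Lemma cyc_small (T : finType) (t : {perm T}) (S : {set T}) x :
  cyclic_perm t -> porbit t x \subset S -> #|T| <= #|S|.
Proof. by move=> /forallP H; rewrite (eqP (H x)) => sub; rewrite -cardsT subset_leq_card. Qed.

Lemma cyc_neq (T : finType) (t : {perm T}) x : 1 < #|T| -> cyclic_perm t -> t x != x.
Proof.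
move=> hn H; apply/negP => /eqP tx.
have : #|T| <= #|[set x]|.
  apply: (@cyc_small _ t _ x H); apply/subsetP => y /porbitP [i ->].
  by rewrite permX_fix // inE.
by rewrite cards1 leqNgt hn.
Qed.

Lemma cyc_neq2 (T : finType) (t : {perm T}) x : 2 < #|T| -> cyclic_perm t -> t (t x) != x.
Proof.
move=> hn H; apply/negP => /eqP tx.
have : #|T| <= #|[set x; t x]|.
  apply: (@cyc_small _ t _ x H); apply/subsetP => y /porbitP [i ->].
  rewrite permX; elim: i => [|i IH] /=; first by rewrite !inE eqxx.
  move: IH; rewrite !inE => /orP [/eqP ->|/eqP ->]; by rewrite ?tx eqxx ?orbT.
rewrite cards2; case: (x != t x) => /=; by rewrite leqNgt ?hn // (ltn_trans _ hn).
Qed.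

Lemma cyc_inj_pair (T : finType) (t : {perm T}) : 2 < #|T| -> cyclic_perm t ->
  injective (fun c => [set c; t c]).
Proof.
move=> hn H c d /= E.
have : c \in [set d; t d] by rewrite -E !inE eqxx.
rewrite !inE => /orP [/eqP //|/eqP cE].
have : d \in [set c; t c] by rewrite E !inE eqxx.
rewrite !inE => /orP [/eqP -> //|/eqP dE].
by move: (cyc_neq2 d hn H); rewrite -cE -dE eqxx.
Qed.

Lemma cycV (T : finType) (t : {perm T}) : cyclic_perm t -> cyclic_perm (t^-1)%g.
Proof.
by move=> /forallP H; apply/forallP => x; rewrite porbitV H.
Qed.

Lemma jacketV (T : finType) (t : {perm T}) : jacket_of (t^-1)%g = jacket_of t.
Proof.
apply/setP => P; apply/imsetP/imsetP => -[c _ ->].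
  by exists ((t^-1)%g c); rewrite // permKV setUC.
by exists (t c); rewrite // permK setUC.
Qed.

Lemma cyc_propagate (T : finType) (t t' : {perm T}) a : 2 < #|T| ->
  cyclic_perm t -> cyclic_perm t' ->
  (forall c, t' c = t c \/ t' c = (t^-1)%g c) -> t' a = t a -> t' = t.
Proof.
move=> hn H H' alt ha.
have key : forall k, t' (iter k t a) = iter k.+1 t a /\ t' (iter k.+1 t a) = iter k.+2 t a.
  elim=> [|k [IH1 IH2]].
    split => //=; case: (alt (t a)) => // E.
    by move: (cyc_neq2 a hn H'); rewrite ha E permK eqxx.
  split => //; case: (alt (iter k.+2 t a)) => // E.
  have E2 : iter k.+2 t a = t (iter k.+1 t a) by [].
  move: E; rewrite {2}E2 permK -IH1 => /perm_inj E.
  by move: (cyc_neq2 (iter k t a) hn H); rewrite -[t (t (iter k t a))]/(iter k.+2 t a) E eqxx.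
apply/permP => x; have /porbitP [i ->] := cycP H a x.
by rewrite permX (key i).1.
Qed.

Lemma jacket_eq (T : finType) (t t' : {perm T}) : 2 < #|T| ->
  cyclic_perm t -> cyclic_perm t' -> jacket_of t' = jacket_of t -> t' = t \/ t' = (t^-1)%g.
Proof.
move=> hn H H' E.
have alt : forall c, t' c = t c \/ t' c = (t^-1)%g c.
  move=> c; have : [set c; t' c] \in jacket_of t by rewrite -E; apply/imsetP; exists c.
  case/imsetP => d _ Ed.
  have : c \in [set d; t d] by rewrite -Ed !inE eqxx.
  rewrite !inE => /orP [/eqP cd|/eqP cd].
    have : t' c \in [set d; t d] by rewrite -Ed !inE eqxx orbT.
    rewrite !inE -cd => /orP [/eqP tc|/eqP ->]; last by left.
    by move: (cyc_neq c (ltnW hn) H'); rewrite tc eqxx.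
  have : t' c \in [set d; t d] by rewrite -Ed !inE eqxx orbT.
  rewrite !inE -cd => /orP [/eqP ->|/eqP tc]; first by right; rewrite cd permK.
  by move: (cyc_neq c (ltnW hn) H'); rewrite tc eqxx.
have /card_gt0P [a _] : 0 < #|T| by apply: ltn_trans hn.
case: (alt a) => [ha|ha].
  by left; apply: cyc_propagate ha.
right; apply: (@cyc_propagate _ (t^-1)%g t' _ hn (cycV H) H') ha.
by move=> c; rewrite invgK; case: (alt c); [right|left].
Qed.

Lemma cyc_invneq (T : finType) (t : {perm T}) : 2 < #|T| -> cyclic_perm t -> (t^-1)%g != t.
Proof.
move=> hn H; apply/negP => /eqP E.
have /card_gt0P [x _] : 0 < #|T| by apply: ltn_trans hn.
have h := permK t x; rewrite E in h.
by move: (cyc_neq2 x hn H); rewrite h eqxx.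
Qed.

Definition Cyc (T : finType) := [set t : {perm T} | cyclic_perm t].

Lemma sum_jackets (T : finType) (g : {set {set T}} -> nat) : 2 < #|T| ->
  \sum_(t in Cyc T) g (jacket_of t) = 2 * \sum_(J in jackets T) g J.
Proof.
move=> hn; rewrite (partition_big_imset (@jacket_of T)) big_distrr /=.
apply: eq_bigr => J /imsetP [t0 Ht0 ->].
rewrite (eq_bigr (fun _ => g (jacket_of t0))); last by move=> t /andP [_ /eqP ->].
rewrite sum_nat_const; congr (_ * _).
have H0 : cyclic_perm t0 by move: Ht0; rewrite inE.
transitivity #|[set t0; (t0^-1)%g]|; last by rewrite cards2 eq_sym (cyc_invneq hn H0).
apply: eq_card => t; rewrite !inE; apply/andP/orP.
  move=> [Ht /eqP E]; rewrite inE in Ht; case: (jacket_eq hn H0 Ht E) => ->; [left|right]; exact: eqxx.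
case=> /eqP ->; first by rewrite eqxx.
by rewrite jacketV eqxx inE cycV. 
Qed.

Lemma card_Cyc_jackets (T : finType) : 2 < #|T| -> #|Cyc T| = 2 * #|jackets T|.
Proof.
move=> hn; have := sum_jackets (fun _ => 1) hn.
by rewrite !sum_nat_const !muln1.
Qed.

Lemma sum_pairs (T : finType) (f : {set T} -> nat) :
  \sum_(c : T) \sum_(d | d != c) f [set c; d] = 2 * \sum_(P : {set T} | #|P| == 2) f P.
Proof.
have step : forall c, \sum_(d | d != c) f [set c; d] = \sum_(P : {set T} | (#|P| == 2) && (c \in P)) f P.
  move=> c; rewrite -(big_imset _ (h := fun d => [set c; d]) (A := [pred d | d != c])) /=.
    apply: eq_bigl => P; apply/imsetP/andP.
      move=> [d]; rewrite inE => dc ->; by rewrite cards2 [c == d]eq_sym dc !inE eqxx.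
    move=> [/cards2P [x [y [xy E]]]]; rewrite E !inE => /orP [/eqP cx|/eqP cy].
      by exists y; rewrite ?inE cx // eq_sym.
    by exists x; [rewrite inE cy | rewrite cy setUC].
  move=> x y _ _ /= E; have : x \in [set c; y] by rewrite -E !inE eqxx orbT.
  rewrite !inE => /orP [/eqP xc|/eqP //].
  have : y \in [set c; x] by rewrite E !inE eqxx orbT.
  by rewrite !inE xc => /orP [/eqP|/eqP].
rewrite (eq_bigr _ (fun c _ => step c)).
rewrite (@exchange_big_dep _ _ _ T {set T} _ _ xpredT (fun c P => (#|P|==2) && (c \in P)) (fun P => #|P| == 2) (fun _ P => f P)) /=; last by move=> c P _ /andP [].
rewrite big_distrr /=; apply: eq_bigr => P /eqP P2.
rewrite (eq_bigl (fun c => c \in P)); last by move=> c; rewrite P2 eqxx.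
by rewrite sum_nat_const P2 mulnC.
Qed.

Lemma sum_cyc (T : finType) (f : {set T} -> nat) N :
  (forall c d, c != d -> #|[set t in Cyc T | t c == d]| = N) -> 2 < #|T| ->
  \sum_(t in Cyc T) \sum_c f [set c; t c] = N * (2 * \sum_(P : {set T} | #|P| == 2) f P).
Proof.
move=> hN hn; rewrite exchange_big -sum_pairs big_distrr /=.
apply: eq_bigr => c _.
rewrite (partition_big (fun t : {perm T} => t c) (fun d => d != c)) /=; last first.
  by move=> t; rewrite inE => /(cyc_neq c (ltnW hn)).
rewrite big_distrr /=; apply: eq_bigr => d dc.
rewrite (eq_bigr (fun _ => f [set c; d])); last by move=> t /andP [_ /eqP ->].
rewrite sum_nat_const; congr (_ * _); rewrite -(hN c d); last by rewrite eq_sym.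
by apply: eq_card => t; rewrite [in RHS]inE.
Qed.

Lemma sum_jacket_faces (T : finType) (f : {set T} -> nat) N :
  (forall c d, c != d -> #|[set t in Cyc T | t c == d]| = N) -> 2 < #|T| ->
  \sum_(J in jackets T) \sum_(P in J) f P = N * \sum_(P : {set T} | #|P| == 2) f P.
Proof.
move=> hN hn.
have : 2 * \sum_(J in jackets T) \sum_(P in J) f P = 2 * (N * \sum_(P : {set T} | #|P| == 2) f P).
  rewrite -(sum_jackets (fun J => \sum_(P in J) f P) hn) mulnCA -(sum_cyc f hN hn).
  apply: eq_bigr => t; rewrite inE => Ht.
  by rewrite /jacket_of big_imset //= => x y _ _; apply: cyc_inj_pair.
by move/eqP; rewrite eqn_pmul2l // => /eqP.
Qed.

Lemma cycJ (T : finType) (t s : {perm T}) : cyclic_perm t -> cyclic_perm (t ^ s)%g.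
Proof.
move=> H; apply/forallP => y; apply/eqP/setP => z; rewrite inE; apply/porbitP.
have /porbitP [i E] := cycP H (s^-1 y)%g (s^-1 z)%g; exists i.
by rewrite -conjXg -(permKV s y) permJ -E permKV.
Qed.

Lemma card_A_le (T : finType) (c d c' d' : T) : c != d -> c' != d' ->
  #|[set t in Cyc T | t c == d]| <= #|[set t in Cyc T | t c' == d']|.
Proof.
move=> cd cd'.
pose t1 := tperm c c'; pose s := (t1 * tperm (t1 d) d')%g.
have sc : s c = c'.
  rewrite permM /t1 tpermL tpermD // ?(eq_sym d') //.
  by rewrite -{2}(tpermL c c') (inj_eq perm_inj) eq_sym.
have sd : s d = d' by rewrite permM tpermL.
have -> : #|[set t in Cyc T | t c == d]| = #|[set (t ^ s)%g | t in [set t in Cyc T | t c == d]]|.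
  by rewrite card_in_imset // => x y _ _; apply: conjg_inj.
apply: subset_leq_card; apply/subsetP => y /imsetP [t]; rewrite !inE => /andP [Ht /eqP tc] ->.
by rewrite cycJ //= -sc permJ tc sd eqxx.
Qed.

Lemma card_A_eq (T : finType) (c d c' d' : T) : c != d -> c' != d' ->
  #|[set t in Cyc T | t c == d]| = #|[set t in Cyc T | t c' == d']|.
Proof. by move=> h h'; apply/eqP; rewrite eqn_leq !card_A_le. Qed.

Lemma card_Cyc_A (T : finType) (c : T) : 1 < #|T| ->
  #|Cyc T| = \sum_(d | d != c) #|[set t in Cyc T | t c == d]|.
Proof.
move=> hn; rewrite -sum1_card (partition_big (fun t : {perm T} => t c) (fun d => d != c)) /=.
  apply: eq_bigr => d _; rewrite -sum1_card; apply: eq_bigl => t; by rewrite !inE.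
by move=> t; rewrite inE => /(cyc_neq c hn).
Qed.

Lemma exists_cyc (T : finType) : exists t0 : {perm T}, cyclic_perm t0.
Proof.
have inj : injective (next (enum T)) by apply: can_inj (prev_next (enum_uniq T)).
exists (perm inj); apply/forallP => x; apply/eqP/setP => y; rewrite inE; apply/porbitP.
have C : fconnect (next (enum T)) x y.
  by apply: (connect_cycle (cycle_next (enum_uniq T))); rewrite mem_enum.
exists (findex (next (enum T)) x y); rewrite permX -{1}(iter_findex C).
by apply: eq_iter => z; rewrite permE.
Qed.

Lemma card_porbit_cyc (T : finType) (t : {perm T}) x : cyclic_perm t -> #|porbit t x| = #|T|.
Proof. by move=> /forallP H; rewrite (eqP (H x)) cardsT. Qed.

Lemma conj_inj_on (T : finType) (t0 : {perm T}) a (s1 s2 : {perm T}) :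
  cyclic_perm t0 -> perm_on (~: [set a]) s1 -> perm_on (~: [set a]) s2 ->
  (t0 ^ s1)%g = (t0 ^ s2)%g -> s1 = s2.
Proof.
move=> H h1 h2 E.
have fa : forall s : {perm T}, perm_on (~: [set a]) s -> s a = a.
  by move=> s hs; apply: out_perm hs _; rewrite !inE negbK.
have key : forall k, s1 (iter k t0 a) = s2 (iter k t0 a).
  elim=> [|k IH] /=; first by rewrite (fa _ h1) (fa _ h2).
  by rewrite -(permJ t0 s1) -(permJ t0 s2) E IH.
apply/permP => x; have /porbitP [i ->] := cycP H a x; by rewrite permX key.
Qed.

Lemma conj_surj (T : finType) (t0 t : {perm T}) a :
  cyclic_perm t0 -> cyclic_perm t ->
  exists2 s : {perm T}, perm_on (~: [set a]) s & t = (t0 ^ s)%g.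
Proof.
move=> H0 H.
have n0 : 0 < #|T| by apply/card_gt0P; exists a.
set s0 := traject t0 a #|T|; set s1 := traject t a #|T|.
have u0 : uniq s0 by rewrite /s0 -(card_porbit_cyc a H0) uniq_traject_porbit.
have m0 : forall x, x \in s0.
  by move=> x; rewrite /s0 -(card_porbit_cyc a H0) -porbit_traject cycP.
have u1 : uniq s1 by rewrite /s1 -(card_porbit_cyc a H) uniq_traject_porbit.
have sz0 : size s0 = #|T| by rewrite size_traject.
have sz1 : size s1 = #|T| by rewrite size_traject.
have ilt : forall x, index x s0 < #|T| by move=> x; rewrite -sz0 index_mem.
have nth0 : forall i, i < #|T| -> nth a s0 i = iter i t0 a.
  by move=> i hi; rewrite /s0 nth_traject.
have nth1 : forall i, i < #|T| -> nth a s1 i = iter i t a.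
  by move=> i hi; rewrite /s1 nth_traject.
pose sf x := nth a s1 (index x s0).
have sfE : forall x, sf x = iter (index x s0) t a by move=> x; rewrite /sf nth1.
have x0E : forall x, x = iter (index x s0) t0 a.
  by move=> x; rewrite -nth0 // nth_index.
have sinj : injective sf.
  move=> x y /eqP; rewrite /sf nth_uniq ?sz1 // => /eqP E.
  by rewrite -(nth_index a (m0 x)) E nth_index.
pose s := perm sinj.
have ia : index a s0 = 0 by rewrite /s0 -(prednK n0) /= eqxx.
have sa : s a = a by rewrite permE sfE ia.
exists s.
  apply/subsetP => x; rewrite !inE; apply: contra => /eqP ->; by rewrite sa.
apply/permP => y; rewrite -(permKV s y) permJ; set x := (s^-1 y)%g.
rewrite !permE !sfE.
have [hlt|hge] := ltnP (index x s0).+1 #|T|.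
  have -> : index (t0 x) s0 = (index x s0).+1.
    by rewrite {1}(x0E x) -iterS -nth0 // index_uniq // sz0.
  by [].
have eqn : (index x s0).+1 = #|T| by apply/eqP; rewrite eqn_leq ilt hge.
have -> : t0 x = a.
  by rewrite {1}(x0E x) -iterS eqn -(card_porbit_cyc a H0) iter_porbit.
by rewrite ia /= -iterS eqn -(card_porbit_cyc a H) iter_porbit.
Qed.

Lemma card_Cyc (T : finType) : 0 < #|T| -> #|Cyc T| = (#|T|).-1`!.
Proof.
move=> /card_gt0P [a _].
have [t0 H0] := exists_cyc T.
have -> : Cyc T = [set (t0 ^ s)%g | s in perm_on (~: [set a])].
  apply/setP => t; rewrite inE; apply/idP/imsetP.
    by move=> H; have [s hs ->] := conj_surj a H0 H; exists s.
  by move=> [s _ ->]; apply: cycJ.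
rewrite card_in_imset; last by move=> s1 s2 h1 h2 E; apply: (conj_inj_on H0 h1 h2 E).
by rewrite card_perm cardsC1.
Qed.

Lemma jacket_facts (T : finType) : 2 < #|T| ->
  2 * #|jackets T| = (#|T|.-1)`! /\
  forall f : {set T} -> nat, \sum_(J in jackets T) \sum_(P in J) f P
     = (#|T|.-2)`! * \sum_(P : {set T} | #|P| == 2) f P.
Proof.
move=> hn.
have /card_gt0P [c _] : 0 < #|T| by apply: ltn_trans hn.
have /card_gt0P [d] : 0 < #|[set~ c]| by rewrite cardsC1 -ltnS (ltn_predK hn) ltnW.
rewrite !inE => dc.
have hN : forall c' d', c' != d' -> #|[set t in Cyc T | t c' == d']| = #|[set t in Cyc T | t c == d]|.
  by move=> c' d' h; apply: card_A_eq; rewrite // eq_sym.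
have eN : #|[set t in Cyc T | t c == d]| = (#|T|.-2)`!.
  have h0 : 0 < #|T| by apply: ltn_trans hn.
  have := card_Cyc h0.
  rewrite (card_Cyc_A c (ltnW hn)) (eq_bigr (fun _ => #|[set t in Cyc T | t c == d]|)); last first.
    by move=> d' h; apply: hN; rewrite eq_sym.
  rewrite sum_nat_const.
  have -> : #|[pred d' | d' != c]| = #|T|.-2.+1.
    transitivity #|[set~ c]|; first by apply: eq_card => x; rewrite !inE.
    by rewrite cardsC1; case: #|T| hn => [|[|k]].
  have e1 : #|T|.-1 = #|T|.-2.+1 by case: #|T| hn => [|[|k]].
  by rewrite e1 factS => /eqP; rewrite eqn_pmul2l // => /eqP.
split.
  by rewrite -card_Cyc_jackets // card_Cyc // ltnW // ltnW.
by move=> f; rewrite (sum_jacket_faces f hN hn) eN.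
Qed.

Definition comps (V : finType) (e : rel V) : {set {set V}} :=
  [set [set y | connect e x y] | x : V].

Lemma comp_unique (V : finType) (e : rel V) (sym : connect_sym e) (x : V) :
  #|[set B in comps e | x \in B]| = 1.
Proof.
apply/eqP/cards1P; exists [set y | connect e x y]; apply/setP => B; rewrite !inE.
apply/andP/eqP.
  move=> [/imsetP [x0 _ ->]]; rewrite inE => cx.
  apply/setP => y; rewrite !inE; apply/idP/idP => h.
    by apply: connect_trans h; rewrite sym.
  by apply: connect_trans cx h.
by move=> ->; split; [apply: imset_f | rewrite inE connect0].
Qed.

Lemma sum_comps_card (V U : finType) (e : rel V) (sym : connect_sym e)
  (u : U -> V) (P : pred U) :
  \sum_(B in comps e) #|[pred y | P y & u y \in B]| = #|P|.
Proof.
rewrite (eq_bigr (fun B : {set V} => \sum_(y | P y && (u y \in B)) 1)); last first.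
  by move=> B _; rewrite sum1_card.
rewrite (@exchange_big_dep _ _ _ _ _ _ _ (fun B => B \in comps e)
   (fun B y => P y && (u y \in B)) P (fun _ _ => 1)) /=; last by move=> B y _ /andP [].
rewrite -sum1_card; apply: eq_bigr => y Py.
rewrite sum1_card -(comp_unique sym (u y)); apply: eq_card => B; by rewrite !inE Py.
Qed.

Lemma edge_csym (Col : finType) p (sg : Col -> {perm 'I_p}) S : connect_sym (edge sg S).
Proof. by apply: sym_connect_sym => [[x|x] [y|y]]. Qed.

Lemma sum_nvert (D p : nat) (sg : 'I_D.+1 -> {perm 'I_p}) :
  \sum_(B in bubbles sg) nvert B = p + p.
Proof.
have := sum_comps_card (edge_csym sg (colors1D D)) id predT.
rewrite card_sum card_ord => <-; apply: eq_bigr => B _.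
by rewrite /nvert; apply: eq_card => x; rewrite !inE.
Qed.

Lemma sum_nlines (D p : nat) (sg : 'I_D.+1 -> {perm 'I_p}) :
  \sum_(B in bubbles sg) nlines 'I_D B = p * D.
Proof.
have := sum_comps_card (edge_csym sg (colors1D D)) (fun wc : 'I_p * 'I_D => inl wc.1) predT.
rewrite card_prod !card_ord => <-; apply: eq_bigr => B _.
by rewrite /nlines; apply: eq_card => x; rewrite !inE.
Qed.

Lemma edge_bubble (D p : nat) (sg : 'I_D.+1 -> {perm 'I_p}) (Q : {set 'I_D}) :
  edge (bubble_colors sg) Q =2 edge sg (lift ord0 @: Q).
Proof.
move=> [x|x] [y|y] //=; apply/existsP/existsP => [[c /andP [hc e]]|[c /andP [/imsetP [c' hc' ->] e]]].
- by exists (lift ord0 c); rewrite imset_f.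
- by exists c'; rewrite hc'.
- by exists (lift ord0 c); rewrite imset_f.
- by exists c'; rewrite hc'.
Qed.

Lemma sum_nfaces (D p : nat) (sg : 'I_D.+1 -> {perm 'I_p}) (Q : {set 'I_D}) :
  \sum_(B in bubbles sg) nfaces (bubble_colors sg) Q B = nfaces sg (lift ord0 @: Q) [set: vtx p].
Proof.
have := sum_comps_card (edge_csym sg (colors1D D)) id (roots (edge sg (lift ord0 @: Q))).
move=> E; rewrite /nfaces /n_comp_mem.
transitivity #|roots (edge sg (lift ord0 @: Q))|; last by apply: eq_card => x; rewrite !inE andbT.
rewrite -E; apply: eq_bigr => B _.
by apply: eq_card => x; rewrite !inE /= (eq_roots (edge_bubble sg Q)).
Qed.

Lemma split_pairs (D : nat) (F : {set 'I_D.+1} -> nat) :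
  \sum_(P : {set 'I_D.+1} | #|P| == 2) F P =
  \sum_(i < D) F [set ord0; lift ord0 i] + \sum_(Q : {set 'I_D} | #|Q| == 2) F (lift ord0 @: Q).
Proof.
rewrite (bigID (fun P : {set 'I_D.+1} => ord0 \in P) (fun P : {set 'I_D.+1} => #|P| == 2)) /=; congr (_ + _).
  transitivity (\sum_(P in [set [set ord0; lift ord0 i] | i in 'I_D]) F P).
    apply: eq_bigl => P; apply/andP/imsetP.
      move=> [/cards2P [x [y [xy ->]]]]; rewrite !inE => /orP [/eqP x0|/eqP y0].
        case: (unliftP ord0 y) => [j yj|y0]; first by exists j => //; rewrite -x0 yj.
        by move: xy; rewrite -x0 y0 eqxx.
      case: (unliftP ord0 x) => [j xj|x0]; first by exists j => //; rewrite -y0 xj setUC.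
      by move: xy; rewrite x0 -y0 eqxx.
    move=> [i _ ->]; by rewrite cards2 neq_lift !inE eqxx.
  rewrite big_imset /=; first by apply: eq_bigl => i; rewrite inE.
  move=> i j _ _ /= E; have : lift ord0 i \in [set ord0; lift ord0 j] by rewrite -E !inE eqxx orbT.
  rewrite !inE [lift ord0 i == ord0]eq_sym (negbTE (neq_lift _ _)) /=.
  by move=> /eqP /lift_inj.
transitivity (\sum_(P in (fun Q : {set 'I_D} => lift ord0 @: Q) @: [set Q : {set 'I_D} | #|Q| == 2]) F P).
  apply: eq_bigl => P; apply/andP/imsetP.
    move=> [P2 P0].
    have E : lift ord0 @: [set j | lift ord0 j \in P] = P.
      apply/setP => x; apply/imsetP/idP => [[j]|xP]; first by rewrite inE => h ->.
      case: (unliftP ord0 x) xP => [j -> h|-> h]; first by exists j; rewrite // inE.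
      by move/negP: P0.
    exists [set j | lift ord0 j \in P]; last by rewrite E.
    by rewrite inE -(card_imset _ (@lift_inj _ ord0)) E.
  move=> [Q]; rewrite inE => Q2 ->; rewrite (card_imset _ (@lift_inj _ ord0)); split => //.
  by apply/negP => /imsetP [j _ E]; move: (neq_lift ord0 j); rewrite -E eqxx.
rewrite big_imset /=; first by apply: eq_bigl => Q; rewrite inE.
by move=> Q1 Q2 _ _; apply: imset_inj; apply: lift_inj.
Qed.

Local Open Scope ring_scope.

Lemma degree_formula (Col : finType) p (sg : Col -> {perm 'I_p}) (C : {set vtx p}) :
  (2 < #|Col|)%N ->
  degree sg C = ((#|Col|.-1)`!)%:R / 4 * (2 - (nvert C)%:R + (nlines Col C)%:R)
     - ((#|Col|.-2)`!)%:R / 2 * (\sum_(P : {set Col} | #|P| == 2) nfaces sg P C)%:R :> rat.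
Proof.
move=> hn; case: (jacket_facts hn) => hJ hF.
rewrite /degree /jacket_genus -mulr_suml sumrB sumr_const -natr_sum.
rewrite (hF (fun P => nfaces sg P C)).
have hJ' : (#|jackets Col|)%:R = ((#|Col|.-1)`!)%:R / 2 :> rat.
  by rewrite -hJ natrM; field.
rewrite -(mulr_natr _ #|jackets Col|) hJ' natrM; field. all: try done.
Qed.

Unset Implicit Arguments.

Theorem mainTheorem3 (D p : nat) (hD : (3 <= D)%N) (hp : (0 < p)%N)
    (sg : 'I_D.+1 -> {perm 'I_p}) (hconn : connected_graph sg) :
  (D%:R - 1) * (#|bubbles sg|)%:R
  - 2 / ((D - 2)`!)%:R * (\sum_(B in bubbles sg) degree (bubble_colors sg) B)
  - (D%:R - 1) * p%:R
  + (\sum_(i < D) nfaces sg [set ord0; lift ord0 i] [set: vtx p])%:R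
  = D%:R - 2 / ((D - 1)`!)%:R * degree sg [set: vtx p] :> rat.
Proof.
have hD1 : (2 < #|'I_D.+1|)%N by rewrite card_ord ltnS ltnW.
have hD2 : (2 < #|'I_D|)%N by rewrite card_ord.
have hV := sum_nvert sg; have hE := sum_nlines sg.
have hY : (\sum_(B in bubbles sg) \sum_(Q : {set 'I_D} | #|Q| == 2) nfaces (bubble_colors sg) Q B
   = \sum_(Q : {set 'I_D} | #|Q| == 2) nfaces sg (lift ord0 @: Q) [set: vtx p])%N.
  rewrite exchange_big; apply: eq_bigr => Q _; exact: sum_nfaces.
have hX := split_pairs (fun P => nfaces sg P [set: vtx p]).
have nV : nvert [set: vtx p] = (p + p)%N by rewrite /nvert cardsT card_sum card_ord.
have nE : nlines 'I_D.+1 [set: vtx p] = (p * D.+1)%N.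
  rewrite /nlines (_ : [set wc : 'I_p * 'I_D.+1 | inl wc.1 \in [set: vtx p]] = setT).
    by rewrite cardsT card_prod !card_ord.
  by apply/setP => x; rewrite !inE.
rewrite (degree_formula _ _ hD1) nV nE hX card_ord.
rewrite (eq_bigr (fun B => ((D.-1)`!)%:R / 4 * (2 - (nvert B)%:R + (nlines 'I_D B)%:R)
   - ((D.-2)`!)%:R / 2 * (\sum_(Q : {set 'I_D} | #|Q| == 2) nfaces (bubble_colors sg) Q B)%:R)); last first.
  by move=> B _; rewrite degree_formula card_ord.
have S1 : \sum_(B in bubbles sg) (2 - (nvert B)%:R + (nlines 'I_D B)%:R)
    = 2 * (#|bubbles sg|)%:R - (p + p)%:R + (p * D)%:R :> rat.
  by rewrite big_split /= sumrB sumr_const -!natr_sum hV hE mulr_natr.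
have S2 : \sum_(B in bubbles sg) ((\sum_(Q : {set 'I_D} | #|Q| == 2) nfaces (bubble_colors sg) Q B)%:R)
    = (\sum_(Q : {set 'I_D} | #|Q| == 2) nfaces sg (lift ord0 @: Q) [set: vtx p])%:R :> rat.
  by rewrite -natr_sum hY.
rewrite sumrB -!mulr_sumr S1 S2 natrD.
have [k Dk] : exists k, D = k.+3 by exists (D - 3)%N; rewrite -addn3 subnK.
subst D.
set Z := (\sum_(i < k.+3) _)%N.
set Y := (\sum_(Q : {set 'I_k.+3} | _) _)%N.
have f0 : (k`!)%:R != 0 :> rat by rewrite pnatr_eq0 -lt0n fact_gt0.
rewrite !subSS subn0 /= !factS !natrM !natrD.
have hk : 0 <= k%:R :> rat by exact: ler0n.
field; rewrite f0 /= !lt0r_neq0 //; lra.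
Qed.
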